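(* For all integers $d\ge0$, $0\le k\le d$ and $i\ge1$, $$\dot{\mathcal{F}}_{d,k,d-k}>\dot{\mathcal{F}}_{d,k+i,d-k+i}>0.$$
   Context: Let $P_k$ denote the classical Legendre polynomial of degree $k$ on $[-1,1]$, normalized so that $P_k(1)=1$ (orthogonal with respect to $\int_{-1}^1\cdot\,dt$). For integers $a,b,c\ge0$, $\dot{\mathcal{F}}_{a,b,c}:=\int_{-1}^1P_a(\tau)P_b(\tau)P_c(\tau)\,d\tau$. *)

(* Defs.v *)
From Stdlib Require Import Reals.
From Coquelicot Require Import Coquelicot.
Open Scope R_scope.

(* legendre_pair n x = (P_n(x), P_{n+1}(x)), computed via Bonnet's recurrence
   (m+2) P_{m+2}(x) = (2m+3) x P_{m+1}(x) - (m+1) P_m(x),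
   with P_0 = 1, P_1 = x.  This gives the classical Legendre polynomials,
   normalized by P_k(1) = 1 and orthogonal on [-1,1] w.r.t. dt. *)
Fixpoint legendre_pair (n : nat) (x : R) : R * R :=
  match n with
  | O => (1, x)
  | S m =>
      let (p, q) := legendre_pair m x in
      (q, ((2 * INR m + 3) * x * q - (INR m + 1) * p) / (INR m + 2))
  end.

Definition legendre (n : nat) (x : R) : R := fst (legendre_pair n x).

Definition Fdot (a b c : nat) : R :=
  RInt (fun t => legendre a t * legendre b t * legendre c t) (-1) 1.

(* Main.v *)
Require Import Defs.
From Stdlib Require Import Reals Lra Lia Psatz ZArith.
From Coquelicot Require Import Coquelicot.
Open Scope R_scope.

Lemma leg0 x : legendre 0 x = 1.
Proof. reflexivity. Qed.
Lemma leg1 x : legendre 1 x = x.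
Proof. reflexivity. Qed.
Lemma legSS n x : legendre (S (S n)) x =
  ((2 * INR n + 3) * x * legendre (S n) x - (INR n + 1) * legendre n x) / (INR n + 2).
Proof. unfold legendre; simpl. destruct (legendre_pair n x); reflexivity. Qed.

Lemma INR_pos_2 n : INR n + 2 <> 0.
Proof. pose proof (pos_INR n); lra. Qed.

Fixpoint Dl (n : nat) (x : R) : R :=
  match n with
  | O => 0
  | S O => 1
  | S ((S m) as n') => (2 * INR m + 3) * legendre n' x + Dl m x
  end.

Lemma Dl_id n x : x * Dl (S n) x - Dl n x = (INR n + 1) * legendre (S n) x /\
                  x * Dl n x - Dl (S n) x = - (INR n + 1) * legendre n x.
Proof.
  induction n as [|n [IH1 IH2]].
  - simpl. rewrite leg1, leg0. split; ring.
  - split.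
    + change (Dl (S (S n)) x) with ((2 * INR n + 3) * legendre (S n) x + Dl n x).
      rewrite legSS, S_INR. pose proof (INR_pos_2 n).
      replace (x * ((2 * INR n + 3) * legendre (S n) x + Dl n x) - Dl (S n) x)
        with ((2 * INR n + 3) * x * legendre (S n) x + (x * Dl n x - Dl (S n) x)) by ring.
      rewrite IH2. field. auto.
    + change (Dl (S (S n)) x) with ((2 * INR n + 3) * legendre (S n) x + Dl n x).
      rewrite S_INR.
      replace (x * Dl (S n) x - ((2 * INR n + 3) * legendre (S n) x + Dl n x))
        with ((x * Dl (S n) x - Dl n x) - (2 * INR n + 3) * legendre (S n) x) by ring.
      rewrite IH1. ring.
Qed.

Lemma leg_derive n x : is_derive (legendre n) x (Dl n x) /\ is_derive (legendre (S n)) x (Dl (S n) x).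
Proof.
  induction n as [|n [IH1 IH2]].
  - split; simpl.
    + apply (is_derive_ext (fun _ => 1)). intros; reflexivity. auto_derive; auto.
    + apply (is_derive_ext (fun t => t)). intros; reflexivity. auto_derive; auto.
  - split; [exact IH2|].
    pose proof (INR_pos_2 n) as Hn.
    apply (is_derive_ext (fun t => plus ((2 * INR n + 3) / (INR n + 2) * mult t (legendre (S n) t))
                                         (- (INR n + 1) / (INR n + 2) * legendre n t))).
    { intros t. rewrite legSS. unfold plus, mult; simpl. change (Rmult t (legendre (S n) t)) with (t * legendre (S n) t). field. auto. }
    assert (H := is_derive_plus _ _ x _ _
       (is_derive_scal _ x ((2 * INR n + 3) / (INR n + 2)) _
          (is_derive_mult (fun t => t) (legendre (S n)) x _ _ (is_derive_id x) IH2 (fun a b => Rmult_comm a b)))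
       (is_derive_scal _ x (- (INR n + 1) / (INR n + 2)) _ IH1)).
    replace (Dl (S (S n)) x) with (plus ((2 * INR n + 3) / (INR n + 2) *
          plus (mult one (legendre (S n) x)) (mult x (Dl (S n) x))) (- (INR n + 1) / (INR n + 2) * Dl n x)).
    exact H.
    change (Dl (S (S n)) x) with ((2 * INR n + 3) * legendre (S n) x + Dl n x).
    destruct (Dl_id n x) as [E1 _].
    set (D1 := Dl (S n) x) in *. set (D0 := Dl n x) in *. set (L1 := legendre (S n) x) in *.
    unfold plus, mult, one; simpl.
    replace (x * D1) with (D0 + (INR n + 1) * L1) by lra.
    field. auto.
Qed.

Lemma leg_is_derive n x : is_derive (legendre n) x (Dl n x).
Proof. apply leg_derive. Qed.

Lemma leg_ex_derive n x : ex_derive (legendre n) x.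
Proof. eexists; apply leg_is_derive. Qed.

Lemma leg_cont n x : continuous (legendre n) x.
Proof. apply (ex_derive_continuous (legendre n)); apply leg_ex_derive. Qed.

Lemma leg_ends n : legendre n 1 = 1 /\ legendre n (-1) = (-1) ^ n /\
                   legendre (S n) 1 = 1 /\ legendre (S n) (-1) = (-1) ^ (S n).
Proof.
  induction n as [|n IH].
  - simpl. rewrite !leg0, !leg1. repeat split; ring.
  - destruct IH as (H0 & H0' & H1 & H2). repeat split; auto.
    + rewrite legSS, H1, H0. pose proof (INR_pos_2 n). field. auto.
    + rewrite legSS, H2, H0'. pose proof (INR_pos_2 n). simpl. field. auto.
Qed.

Lemma int_leg n : RInt (legendre n) (-1) 1 = if Nat.eqb n 0 then 2 else 0.
Proof.
  destruct n as [|n].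
  - rewrite (RInt_ext _ (fun _ => 1)) by (intros; reflexivity).
    rewrite RInt_const. simpl. unfold scal; simpl; unfold mult; simpl. ring.
  - simpl Nat.eqb.
    apply is_RInt_unique.
    assert (H := is_RInt_derive (fun t => (legendre (S (S n)) t - legendre n t) / (2 * INR n + 3))
                   (legendre (S n)) (-1) 1).
    replace 0 with (minus ((fun t => (legendre (S (S n)) t - legendre n t) / (2 * INR n + 3)) 1)
                          ((fun t => (legendre (S (S n)) t - legendre n t) / (2 * INR n + 3)) (-1))).
    apply H.
    + intros x _. pose proof (pos_INR n).
      apply (is_derive_ext (fun t => (1 / (2 * INR n + 3)) * (plus (legendre (S (S n)) t) (opp (legendre n t))))).
      { intros t; unfold plus, opp; simpl. field. lra. }
      replace (legendre (S n) x) with (1 / (2 * INR n + 3) * (plus (Dl (S (S n)) x) (opp (Dl n x)))).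
      apply (is_derive_scal (fun t => plus (legendre (S (S n)) t) (opp (legendre n t)))). apply (is_derive_plus (legendre (S (S n))) (fun t => opp (legendre n t))). apply leg_is_derive. apply (is_derive_opp (legendre n)). apply leg_is_derive.
      unfold plus, opp; simpl. change (Dl (S (S n)) x) with ((2 * INR n + 3) * legendre (S n) x + Dl n x).
      field. lra.
    + intros x _. apply leg_cont.
    + unfold minus, plus, opp; simpl.
      destruct (leg_ends n) as (A1 & A2 & _).
      destruct (leg_ends (S n)) as (_ & _ & A3 & A4).
      rewrite A1, A2, A3, A4. simpl. pose proof (pos_INR n). field. lra.
Qed.
Lemma cont_mult (f g : R -> R) x : continuous f x -> continuous g x -> continuous (fun t => f t * g t) x.
Proof. intros Hf Hg. apply (@continuous_mult R_UniformSpace R_AbsRing f g x Hf Hg). Qed.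

Lemma cont3 a b c x : continuous (fun t => legendre a t * legendre b t * legendre c t) x.
Proof. apply cont_mult; [apply cont_mult|]; apply leg_cont. Qed.

Lemma contx3 a b c x : continuous (fun t => t * (legendre a t * legendre b t * legendre c t)) x.
Proof. apply cont_mult. apply continuous_id. apply cont3. Qed.

Lemma ex3 a b c : ex_RInt (fun t => legendre a t * legendre b t * legendre c t) (-1) 1.
Proof. apply (@ex_RInt_continuous R_CompleteNormedModule). intros; apply cont3. Qed.

Lemma exx3 a b c : ex_RInt (fun t => t * (legendre a t * legendre b t * legendre c t)) (-1) 1.
Proof. apply (@ex_RInt_continuous R_CompleteNormedModule). intros; apply contx3. Qed.

Lemma RInt_scal_R (f : R -> R) k : ex_RInt f (-1) 1 ->
  RInt (fun t => k * f t) (-1) 1 = k * RInt f (-1) 1.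
Proof. intros H. apply (RInt_scal f (-1) 1 k H). Qed.

Lemma RInt_plus_R (f g : R -> R) : ex_RInt f (-1) 1 -> ex_RInt g (-1) 1 ->
  RInt (fun t => f t + g t) (-1) 1 = RInt f (-1) 1 + RInt g (-1) 1.
Proof. intros H1 H2. apply (RInt_plus f g (-1) 1 H1 H2). Qed.

Lemma xleg b x : (2 * INR b + 1) * (x * legendre b x) =
  (INR b + 1) * legendre (S b) x + INR b * legendre (b - 1) x.
Proof.
  destruct b as [|m].
  - simpl. rewrite leg1, leg0. ring.
  - rewrite legSS. replace (S m - 1)%nat with m by lia. rewrite S_INR.
    pose proof (pos_INR m). field. lra.
Qed.

Definition W a b c := RInt (fun t => t * (legendre a t * legendre b t * legendre c t)) (-1) 1.

Lemma W_rec a b c : (2 * INR b + 1) * W a b c =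
  (INR b + 1) * Fdot a (S b) c + INR b * Fdot a (b - 1) c.
Proof.
  unfold W, Fdot.
  rewrite <- RInt_scal_R by apply exx3.
  rewrite <- (RInt_scal_R _ (INR b + 1)) by apply ex3.
  rewrite <- (RInt_scal_R _ (INR b)) by apply ex3.
  rewrite <- RInt_plus_R.
  2: { apply (ex_RInt_scal (fun t => legendre a t * legendre (S b) t * legendre c t)). apply ex3. }
  2: { apply (ex_RInt_scal (fun t => legendre a t * legendre (b-1) t * legendre c t)). apply ex3. }
  apply RInt_ext. intros x _. simpl.
  transitivity (legendre a x * legendre c x * ((2 * INR b + 1) * (x * legendre b x))). ring.
  rewrite xleg. ring.
Qed.

Lemma W_sym a b c : W a b c = W a c b.
Proof. unfold W. apply RInt_ext. intros; simpl; ring. Qed.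

Lemma Fdot_sym23 a b c : Fdot a b c = Fdot a c b.
Proof. unfold Fdot. apply RInt_ext. intros; simpl; ring. Qed.
Lemma Fdot_sym12 a b c : Fdot a b c = Fdot b a c.
Proof. unfold Fdot. apply RInt_ext. intros; simpl; ring. Qed.

Lemma Fdot_rec a b c :
  (2 * INR c + 1) * ((INR b + 1) * Fdot a (S b) c + INR b * Fdot a (b - 1) c) =
  (2 * INR b + 1) * ((INR c + 1) * Fdot a b (S c) + INR c * Fdot a b (c - 1)).
Proof.
  rewrite <- W_rec, (Fdot_sym23 a b (S c)), (Fdot_sym23 a b (c - 1)), <- W_rec, W_sym. ring.
Qed.
Fixpoint Acoef (n : nat) : R :=
  match n with O => 1 | S m => Acoef m * (2 * INR m + 1) / (2 * INR m + 2) end.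

Lemma Acoef_pos n : 0 < Acoef n.
Proof.
  induction n; simpl. lra. pose proof (pos_INR n).
  apply Rmult_lt_0_compat. apply Rmult_lt_0_compat; lra. apply Rinv_0_lt_compat; lra.
Qed.

Definition Az (z : Z) : R := match z with Z.neg _ => 0 | _ => Acoef (Z.to_nat z) end.

Lemma Az_nat n : Az (Z.of_nat n) = Acoef n.
Proof. destruct n as [|n]; [reflexivity|]. change (Az (Z.of_nat (S n))) with (Acoef (Z.to_nat (Z.of_nat (S n)))). rewrite Nat2Z.id. reflexivity. Qed.

Lemma Az_neg z : (z < 0)%Z -> Az z = 0.
Proof. destruct z; simpl; intros; auto; lia. Qed.

Lemma Acoef_S m : (2 * INR (S m) - 1) * Acoef m = 2 * INR (S m) * Acoef (S m).
Proof. simpl Acoef. rewrite S_INR. pose proof (pos_INR m). field. lra. Qed.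

Lemma Az_pred z : (2 * IZR z - 1) * Az (z - 1) = 2 * IZR z * Az z.
Proof.
  destruct (Z_lt_le_dec z 1).
  - destruct (Z_lt_le_dec z 0).
    + rewrite !Az_neg by lia. ring.
    + replace z with 0%Z by lia. rewrite Az_neg by lia. simpl. ring.
  - destruct (Z_of_nat_complete (z - 1)) as [m Hm]; [lia|].
    replace z with (Z.of_nat (S m)) by lia.
    replace (Z.of_nat (S m) - 1)%Z with (Z.of_nat m) by lia.
    rewrite !Az_nat, <- INR_IZR_INZ. apply Acoef_S.
Qed.

Lemma odd_nz z : 2 * IZR z - 1 <> 0.
Proof.
  intro H. assert (H2 : IZR (2 * z - 1) = 0) by (rewrite minus_IZR, mult_IZR; simpl; lra).
  apply eq_IZR_R0 in H2. lia.
Qed.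

Definition G (a b c : nat) : R :=
  if Nat.even (a + b + c) then
    let s := ((a + b + c) / 2)%nat in
    2 / (2 * INR s + 1) * Az (Z.of_nat s - Z.of_nat a) * Az (Z.of_nat s - Z.of_nat b)
      * Az (Z.of_nat s - Z.of_nat c) / Acoef s
  else 0.

Lemma G_even a b c s : (a + b + c = 2 * s)%nat ->
  G a b c = 2 / (2 * INR s + 1) * Az (Z.of_nat s - Z.of_nat a) * Az (Z.of_nat s - Z.of_nat b)
      * Az (Z.of_nat s - Z.of_nat c) / Acoef s.
Proof.
  intros H. unfold G. rewrite H.
  replace (Nat.even (2 * s)) with true by (symmetry; apply Nat.even_spec; exists s; lia).
  replace ((2 * s) / 2)%nat with s. reflexivity.
  rewrite Nat.mul_comm, Nat.div_mul; lia.
Qed.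

Lemma G_odd a b c m : (a + b + c = 2 * m + 1)%nat -> G a b c = 0.
Proof.
  intros H. unfold G. rewrite H.
  replace (Nat.even (2 * m + 1)) with false. reflexivity.
  symmetry. rewrite <- Nat.negb_odd. apply Bool.negb_false_iff. apply Nat.odd_spec. exists m; lia.
Qed.

Definition Rec (f : nat -> nat -> R) := forall b c,
  (2 * INR c + 1) * ((INR b + 1) * f (S b) c + INR b * f (b - 1)%nat c) =
  (2 * INR b + 1) * ((INR c + 1) * f b (S c) + INR c * f b (c - 1)%nat).

Lemma uniq_step f g c : Rec f -> Rec g -> (forall b, f b c = g b c) -> (forall b, f b (c - 1)%nat = g b (c - 1)%nat) ->
  forall b, f b (S c) = g b (S c).
Proof.
  intros Hf Hg H1 H2 b.
  pose proof (Hf b c) as E1. pose proof (Hg b c) as E2.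
  rewrite !H1, H2 in E1.
  assert (E : (2 * INR b + 1) * (INR c + 1) * (f b (S c) - g b (S c)) = 0) by lra.
  pose proof (pos_INR b). pose proof (pos_INR c).
  apply Rmult_integral in E. destruct E as [E|E]; [apply Rmult_integral in E; destruct E; lra | lra].
Qed.

Lemma uniq f g : Rec f -> Rec g -> (forall b, f b 0%nat = g b 0%nat) -> forall b c, f b c = g b c.
Proof.
  intros Hf Hg H0.
  assert (K : forall c, (forall b, f b c = g b c) /\ (forall b, f b (S c) = g b (S c))).
  { induction c as [|c [IH1 IH2]].
    - split; auto. apply uniq_step; auto; intros; simpl; rewrite ?Nat.sub_0_r; auto.
    - split; [exact IH2|]. apply uniq_step; auto. simpl. rewrite Nat.sub_0_r. exact IH1. }
  intros b c; apply K.
Qed.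

Lemma core (p q r s ap aq ar apm aqm arm As Asm : R) :
  s = p + q + r - 1 -> 1 <= s ->
  (2*p-1)*apm = 2*p*ap -> (2*q-1)*aqm = 2*q*aq -> (2*r-1)*arm = 2*r*ar ->
  2*p-1 <> 0 -> 2*q-1 <> 0 -> 2*r-1 <> 0 -> As <> 0 -> (2*s-1)*Asm = 2*s*As ->
  (2*(s-r)+1)*((s-q+1)*(2/(2*s+1)*ap*aqm*ar/As) + (s-q)*(2/(2*s-1)*apm*aq*arm/Asm)) =
  (2*(s-q)+1)*((s-r+1)*(2/(2*s+1)*ap*aq*arm/As) + (s-r)*(2/(2*s-1)*apm*aqm*ar/Asm)).
Proof.
  intros Hs Hs0 Hp Hq Hr Hp0 Hq0 Hr0 HA HAs.
  assert (Ep : apm = 2*p*ap/(2*p-1)) by (field_simplify_eq; try lra).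
  assert (Eq : aqm = 2*q*aq/(2*q-1)) by (field_simplify_eq; try lra).
  assert (Er : arm = 2*r*ar/(2*r-1)) by (field_simplify_eq; try lra).
  assert (Es : Asm = 2*s*As/(2*s-1)) by (field_simplify_eq; try lra).
  subst apm aqm arm Asm. subst s. field. repeat split; auto; lra.
Qed.

Lemma G_rec a : Rec (G a).
Proof.
  intros b c.
  destruct (Nat.Even_or_Odd (a + b + c)) as [[s Hs]|[m Hm]].
  - rewrite (G_odd a (S b) c s) by lia. rewrite (G_odd a b (S c) s) by lia.
    assert (Hb : INR b * G a (b - 1) c = 0).
    { destruct b as [|b']. simpl; ring. rewrite (G_odd a (S b' - 1) c (s - 1)) by lia. ring. }
    assert (Hc : INR c * G a b (c - 1) = 0).
    { destruct c as [|c']. simpl; ring. rewrite (G_odd a b (S c' - 1) (s - 1)) by lia. ring. }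
    rewrite Hb, Hc. ring.
  - set (P := (Z.of_nat (S m) - Z.of_nat a)%Z).
    set (Q := (Z.of_nat (S m) - Z.of_nat b)%Z).
    set (R := (Z.of_nat (S m) - Z.of_nat c)%Z).
    rewrite (G_even a (S b) c (S m)) by lia. rewrite (G_even a b (S c) (S m)) by lia.
    replace (Z.of_nat (S m) - Z.of_nat a)%Z with P by reflexivity.
    replace (Z.of_nat (S m) - Z.of_nat (S b))%Z with (Q - 1)%Z by (unfold Q; lia).
    replace (Z.of_nat (S m) - Z.of_nat (S c))%Z with (R - 1)%Z by (unfold R; lia).
    fold Q R.
    assert (Hb : INR b * G a (b - 1) c = INR b * (2 / (2 * INR m + 1) * Az (P - 1) * Az Q * Az (R - 1) / Acoef m)).
    { destruct b as [|b']. simpl; ring. rewrite (G_even a (S b' - 1) c m) by lia.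
      replace (Z.of_nat m - Z.of_nat a)%Z with (P - 1)%Z by (unfold P; lia).
      replace (Z.of_nat m - Z.of_nat (S b' - 1))%Z with Q by (unfold Q; lia).
      replace (Z.of_nat m - Z.of_nat c)%Z with (R - 1)%Z by (unfold R; lia). reflexivity. }
    assert (Hc : INR c * G a b (c - 1) = INR c * (2 / (2 * INR m + 1) * Az (P - 1) * Az (Q - 1) * Az R / Acoef m)).
    { destruct c as [|c']. simpl; ring. rewrite (G_even a b (S c' - 1) m) by lia.
      replace (Z.of_nat m - Z.of_nat a)%Z with (P - 1)%Z by (unfold P; lia).
      replace (Z.of_nat m - Z.of_nat b)%Z with (Q - 1)%Z by (unfold Q; lia).
      replace (Z.of_nat m - Z.of_nat (S c' - 1))%Z with R by (unfold R; lia). reflexivity. }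
    rewrite Hb, Hc.
    assert (Eb : INR b = INR (S m) - IZR Q) by (unfold Q; rewrite minus_IZR, <- !INR_IZR_INZ; ring).
    assert (Ec : INR c = INR (S m) - IZR R) by (unfold R; rewrite minus_IZR, <- !INR_IZR_INZ; ring).
    assert (Em : 2 * INR m + 1 = 2 * INR (S m) - 1) by (rewrite S_INR; ring).
    assert (Es : INR (S m) = IZR P + IZR Q + IZR R - 1).
    { unfold P, Q, R. rewrite !minus_IZR, <- !INR_IZR_INZ. rewrite !S_INR. 
      assert (H : INR (a + b + c) = INR (2 * m + 1)) by (f_equal; lia).
      rewrite !plus_INR, mult_INR in H. simpl in H. lra. }
    rewrite Eb, Ec, Em.
    apply (core (IZR P) (IZR Q) (IZR R) (INR (S m))); auto using odd_nz.
    + rewrite S_INR. pose proof (pos_INR m). lra.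
    + apply Az_pred.
    + apply Az_pred.
    + apply Az_pred.
    + pose proof (Acoef_pos (S m)). lra.
    + apply Acoef_S.
Qed.

Lemma Fdot_Rec a : Rec (Fdot a).
Proof. intros b c. apply Fdot_rec. Qed.

Lemma Fdot0_base b : Fdot 0 b 0 = G 0 b 0.
Proof.
  unfold Fdot. rewrite (RInt_ext _ (legendre b)) by (intros; simpl; rewrite leg0; ring).
  rewrite int_leg. destruct b as [|b'].
  - simpl Nat.eqb. rewrite (G_even 0 0 0 0) by lia. simpl. field.
  - simpl Nat.eqb. destruct (Nat.Even_or_Odd (S b')) as [[s Hs]|[m Hm]].
    + rewrite (G_even 0 (S b') 0 s) by lia. rewrite (Az_neg (Z.of_nat s - Z.of_nat (S b'))) by lia. rewrite Rmult_0_r, Rmult_0_l. unfold Rdiv. rewrite Rmult_0_l. reflexivity.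
    + rewrite (G_odd 0 (S b') 0 m) by lia. reflexivity.
Qed.

Lemma G_perm a b : G 0 a b = G a b 0.
Proof.
  destruct (Nat.Even_or_Odd (a + b)) as [[s Hs]|[m Hm]].
  - rewrite (G_even 0 a b s) by lia. rewrite (G_even a b 0 s) by lia. unfold Rdiv. ring.
  - rewrite (G_odd 0 a b m) by lia. rewrite (G_odd a b 0 m) by lia. reflexivity.
Qed.

Lemma Fdot_G0 b c : Fdot 0 b c = G 0 b c.
Proof. apply (uniq (Fdot 0) (G 0)); auto using Fdot_Rec, G_rec, Fdot0_base. Qed.

Lemma Fdot_G a b c : Fdot a b c = G a b c.
Proof.
  apply (uniq (Fdot a) (G a)); auto using Fdot_Rec, G_rec.
  intros b0. rewrite Fdot_sym12, Fdot_sym23, Fdot_sym12, Fdot_sym23, Fdot_G0. apply G_perm.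
Qed.

Definition fR d i := Acoef (d + i) * (2 * INR (d + i) + 1) / Acoef i.

Lemma Acoef_S' n : Acoef (S n) = Acoef n * (2 * INR n + 1) / (2 * INR n + 2).
Proof. reflexivity. Qed.

Lemma fR_step d i : fR d i < fR d (S i).
Proof.
  unfold fR. rewrite Nat.add_succ_r, !Acoef_S', S_INR.
  pose proof (Acoef_pos (d + i)) as Hx. pose proof (Acoef_pos i) as Hy.
  pose proof (pos_INR (d + i)). pose proof (pos_INR i).
  set (x := Acoef (d + i)) in *. set (y := Acoef i) in *.
  set (D := INR (d + i)) in *. set (j := INR i) in *.
  set (K := x * (2 * D + 1) / y).
  assert (HK : 0 < K).
  { unfold K. apply Rmult_lt_0_compat. apply Rmult_lt_0_compat; lra. apply Rinv_0_lt_compat; lra. }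
  assert (E : x * (2 * D + 1) / (2 * D + 2) * (2 * (D + 1) + 1) / (y * (2 * j + 1) / (2 * j + 2))
              = K * (1 + (2 * D + 2 * j + 4) / ((2 * D + 2) * (2 * j + 1)))).
  { unfold K. field. repeat split; lra. }
  rewrite E. rewrite <- (Rmult_1_r K) at 1. apply Rmult_lt_compat_l; auto.
  assert (0 < (2 * D + 2 * j + 4) / ((2 * D + 2) * (2 * j + 1))).
  { apply Rdiv_lt_0_compat. lra. apply Rmult_lt_0_compat; lra. }
  lra.
Qed.

Lemma fR_gt d i : fR d 0 < fR d (S i).
Proof.
  induction i. apply fR_step. eapply Rlt_trans. exact IHi. apply fR_step.
Qed.

Theorem lemmaA2 (d k i : nat) (hk : (k <= d)%nat) (hi : (1 <= i)%nat) :
  Fdot d k (d - k) > Fdot d (k + i) (d - k + i) /\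
  Fdot d (k + i) (d - k + i) > 0.
Proof.
  rewrite !Fdot_G.
  rewrite (G_even d k (d - k) d) by lia.
  rewrite (G_even d (k + i) (d - k + i) (d + i)) by lia.
  replace (Z.of_nat d - Z.of_nat d)%Z with (Z.of_nat 0) by lia.
  replace (Z.of_nat d - Z.of_nat k)%Z with (Z.of_nat (d - k)) by lia.
  replace (Z.of_nat d - Z.of_nat (d - k))%Z with (Z.of_nat k) by lia.
  replace (Z.of_nat (d + i) - Z.of_nat d)%Z with (Z.of_nat i) by lia.
  replace (Z.of_nat (d + i) - Z.of_nat (k + i))%Z with (Z.of_nat (d - k)) by lia.
  replace (Z.of_nat (d + i) - Z.of_nat (d - k + i))%Z with (Z.of_nat k) by lia.
  rewrite !Az_nat.
  destruct i as [|i']; [lia|].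
  pose proof (fR_gt d i') as Hf.
  assert (Hf0 : fR d 0 = Acoef d * (2 * INR d + 1)) by (unfold fR; rewrite Nat.add_0_r; simpl; field).
  pose proof (Acoef_pos d). pose proof (Acoef_pos k). pose proof (Acoef_pos (d - k)).
  pose proof (Acoef_pos (S i')). pose proof (Acoef_pos (d + S i')).
  pose proof (pos_INR d). pose proof (pos_INR (d + S i')).
  set (C := 2 * Acoef (d - k) * Acoef k).
  assert (HC : 0 < C) by (unfold C; apply Rmult_lt_0_compat; [apply Rmult_lt_0_compat|]; lra).
  assert (E1 : 2 / (2 * INR d + 1) * Acoef 0 * Acoef (d - k) * Acoef k / Acoef d = C / fR d 0).
  { rewrite Hf0. unfold C. simpl. field. lra. }
  assert (E2 : 2 / (2 * INR (d + S i') + 1) * Acoef (S i') * Acoef (d - k) * Acoef k / Acoef (d + S i')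
               = C / fR d (S i')).
  { unfold C, fR. field. repeat split; lra. }
  assert (Hpos0 : 0 < fR d 0) by (rewrite Hf0; apply Rmult_lt_0_compat; lra).
  rewrite E1, E2. split.
  - unfold Rdiv. apply Rmult_lt_compat_l; auto. apply Rinv_lt_contravar; auto.
    apply Rmult_lt_0_compat; lra.
  - apply Rdiv_lt_0_compat; lra.
Qed.
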